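(* Let $N'\ge2$ and let $\mu_1<0<\mu_2<\cdots<\mu_{N'}$ be real numbers. Let $\delta$ be a sufficiently small positive constant ($0<\delta\ll1$, in particular $\delta<\mu_2$) and let $0<a<1<b<c$ be constants. Define $$\bar x_1=\frac{b-1}{2b[-\mu_1+\delta]},\qquad \bar x_k(m)=\frac{\frac{c+m-1}{m}-a}{2a[\mu_k-\delta]}\quad(2\le k\le N',\ m\ge1).$$ Call admissible any choice of a nonempty set $S\subseteq\{2,\dots,N'\}$ with $m=|S|$, together with positive reals $x_1$ and $(x_k)_{k\in S}$ satisfying $x_1\le\bar x_1$ and $x_k\ge\bar x_k(m)$ for all $k\in S$; for such a choice set $\pi_1=\frac{x_1}{x_1+\sum_{k\in S}x_k}$. Then the maximum of $\pi_1$ over all admissible choices is $$\pi_1^*=\frac{\frac{b-1}{2b[-\mu_1+\delta]}}{\frac{b-1}{2b[-\mu_1+\delta]}+\frac{c-a}{2a[\mu_{N'}-\delta]}},$$ attained with $S=\{N'\}$, $x_1=\bar x_1$, $x_{N'}=\bar x_{N'}(1)$.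
   Context: Setting: graphs $G_1,\dots,G_{N'}$ on a common node set with adjacency matrices $A_l$, constant cure probability $\beta$ and infection probability $\gamma$; configuration $\mathcal C_l=(G_l,\beta,\gamma)$, $\mu_l=\beta-\gamma\lambda_1(A_l)$ where $\lambda_1(A)$ is the eigenvalue of largest modulus. $\mathcal C_1$ violates the epidemic threshold ($\mu_1<0$); $\mathcal C_2,\dots,\mathcal C_{N'}$ are moving-target-defense-induced configurations satisfying it. The defender switches between $\mathcal C_1$ and the configurations $\mathcal C_k$, $k\in S$, by a continuous-time Markov chain with generator $Q$; $x_l=1/(-q_{ll})$ is the expected sojourn time in $\mathcal C_l$ and $\pi_l=x_l/\sum_p x_p$ the portion of time in $\mathcal C_l$. The bounds $x_1\le\bar x_1$, $x_k\ge\bar x_k(m)$ are exactly the sojourn-time conditions of a sufficient almost-sure convergence criterion (with one violating configuration and $m+1$ configurations in total), in which $\delta,a,b,c$ are constants such that there exist symmetric positive definite matrices $P_l$ with $aI<P_k<I$ for the satisfying configurations, $bI<P_1<cI$, and $\{P_l[\gamma A_l-\beta I]\}^s\le[\gamma\lambda_1(A_l)-\beta+\delta/2]P_l$. Thus $\pi_1^*$ is the maximal portion of time the system can stay in $\mathcal C_1$ under this criterion. *)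

(* Defs.v *)
From mathcomp Require Import all_boot all_order all_algebra.
Set Implicit Arguments. Unset Strict Implicit. Unset Printing Implicit Defensive.
Import Order.TTheory GRing.Theory Num.Theory.
Local Open Scope ring_scope.

(* Configurations are indexed by naturals 1..N'; indices are taken in 'I_(N'.+1)
   (index 0 is unused). mu k = mu_k, x k = expected sojourn time x_k. *)

Definition xbar1 {R : realFieldType} (mu1 delta b : R) : R :=
  (b - 1) / (2 * b * (- mu1 + delta)).

Definition xbark {R : realFieldType} (muk delta a c : R) (m : nat) : R :=
  ((c + m%:R - 1) / m%:R - a) / (2 * a * (muk - delta)).

Definition pi1 {R : realFieldType} {N : nat} (S : {set 'I_N.+1}) (x : 'I_N.+1 -> R)
  (i1 : 'I_N.+1) : R :=
  x i1 / (x i1 + \sum_(k in S) x k).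

Definition admissible {R : realFieldType} {N : nat} (mu : 'I_N.+1 -> R) (delta a b c : R)
  (i1 : 'I_N.+1) (S : {set 'I_N.+1}) (x : 'I_N.+1 -> R) : Prop :=
  [/\ S != set0,
      (forall k, k \in S -> (2 <= (k : nat))%N),
      0 < x i1 /\
      (forall k, k \in S -> 0 < x k),
      x i1 <= xbar1 (mu i1) delta b
    & (forall k, k \in S -> xbark (mu k) delta a c #|S| <= x k)].

(* Main.v *)
Require Import Defs.
From mathcomp Require Import all_boot all_order all_algebra.
From mathcomp Require Import ring lra.
Import Order.TTheory GRing.Theory Num.Theory.
Local Open Scope ring_scope.

Lemma mono_mu (R : realFieldType) (N : nat) (mu : 'I_N.+1 -> R)
  (mu_incr : forall k : 'I_N.+1, (2 <= (k : nat) < N)%N -> mu k < mu (inord k.+1)) :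
  forall j i, (2 <= i)%N -> (i <= j)%N -> (j <= N)%N -> mu (inord i) <= mu (inord j).
Proof.
elim=> [|j IH] i hi hij hjN; first by move: (leq_trans hi hij).
case: (ltngtP i j.+1) => [hlt||->]; last first; [by []| by rewrite ltnNge hij|].
have hij' : (i <= j)%N by [].
have h2j : (2 <= j)%N := leq_trans hi hij'.
apply: (le_trans (IH i hi hij' (ltnW hjN))).
have := mu_incr (inord j). rewrite inordK; last by apply: (leq_trans (ltnW hjN)).
move=> H; apply/ltW/H; by rewrite h2j hjN.
Qed.

Lemma pi_le (R : realFieldType) (x1 X s T : R) :
  0 < x1 -> x1 <= X -> 0 < T -> T <= s -> x1 / (x1 + s) <= X / (X + T).
Proof.
move=> h1 h2 h3 h4.
rewrite ler_pdivrMr; last by lra.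
rewrite mulrAC ler_pdivlMr; last by lra.
nra.
Qed.

Theorem theorem5 (R : realFieldType) (N : nat) (hN : (2 <= N)%N)
  (mu : 'I_N.+1 -> R) (delta a b c : R)
  (mu1neg : mu (inord 1) < 0)
  (mu2pos : 0 < mu (inord 2))
  (mu_incr : forall k : 'I_N.+1, (2 <= (k : nat) < N)%N -> mu k < mu (inord k.+1))
  (hdelta0 : 0 < delta) (hdelta : delta < mu (inord 2))
  (ha0 : 0 < a) (ha1 : a < 1) (hb1 : 1 < b) (hbc : b < c) :
  let pistar := xbar1 (mu (inord 1)) delta b /
      (xbar1 (mu (inord 1)) delta b + (c - a) / (2 * a * (mu ord_max - delta))) in
  (forall (S : {set 'I_N.+1}) (x : 'I_N.+1 -> R),
      admissible mu delta a b c (inord 1) S x -> pi1 S x (inord 1) <= pistar)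
  /\
  (let xopt := fun k : 'I_N.+1 =>
       if k == inord 1 then xbar1 (mu (inord 1)) delta b
       else xbark (mu ord_max) delta a c 1 in
   admissible mu delta a b c (inord 1) [set ord_max] xopt /\
   pi1 [set ord_max] xopt (inord 1) = pistar).
Proof.
have homax : ord_max = inord N :> 'I_N.+1 by apply/val_inj; rewrite /= inordK.
have hmuN : mu (inord 2) <= mu ord_max.
  by rewrite homax; apply: mono_mu.
have hDpos : 0 < mu ord_max - delta by lra.
have hD2 : 0 < 2 * a * (mu ord_max - delta) by rewrite !mulr_gt0.
have hX : 0 < xbar1 (mu (inord 1)) delta b.
  rewrite /xbar1 divr_gt0 //; first lra.
  rewrite !mulr_gt0 //; lra.
have hT : 0 < (c - a) / (2 * a * (mu ord_max - delta)).
  by rewrite divr_gt0 //; lra.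
move=> pistar; split.
  move=> S x [hS0 hS2 [hx1 hxk] hx1b hxkb].
  rewrite /pi1 /pistar; apply: pi_le => //.
  set m := #|S|.
  have hm : (1 <= m)%N by rewrite card_gt0.
  set B := ((c + m%:R - 1) / m%:R - a) / (2 * a * (mu ord_max - delta)).
  have hmR : 1 <= (m%:R : R) by rewrite ler1n.
  have hnum : 0 < (c + m%:R - 1) / m%:R - a.
    rewrite subr_gt0 ltr_pdivlMr; last by lra.
    nra.
  have hB : forall k, k \in S -> B <= x k.
    move=> k hk; apply: le_trans (hxkb k hk).
    rewrite /xbark -/m /B.
    have hk2 := hS2 k hk.
    have hkN : (k <= N)%N by rewrite -ltnS.
    have hmu2k : mu (inord 2) <= mu k.
      by have := @mono_mu _ _ mu mu_incr k 2 (leqnn 2) hk2 hkN; rewrite inord_val.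
    have hmukN : mu k <= mu ord_max.
      by rewrite homax; have := @mono_mu _ _ mu mu_incr N k hk2 hkN (leqnn N); rewrite inord_val.
    rewrite ler_pM2l //.
    rewrite lef_pV2 ?posrE; [| by [] | by rewrite !mulr_gt0 //; lra].
    rewrite ler_pM2l ?mulr_gt0 //; lra.
  apply: le_trans (ler_sum _ hB); rewrite sumr_const -/m -(mulr_natr B m).
  rewrite /B [X in _ <= X]mulrAC ler_pM2r ?invr_gt0 //.
  rewrite mulrBl divfK; last by rewrite pnatr_eq0 -lt0n.
  nra.
move=> xopt.
have h1N : inord 1 != ord_max :> 'I_N.+1.
  apply/eqP => /(congr1 val); rewrite /= inordK //; last by apply: leqW.
  by move=> h; move: hN; rewrite -h.
have hxm : xopt ord_max = (c - a) / (2 * a * (mu ord_max - delta)).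
  rewrite /xopt eq_sym (negbTE h1N) /xbark addrK divr1 //.
have hx1 : xopt (inord 1) = xbar1 (mu (inord 1)) delta b by rewrite /xopt eqxx.
split.
  split.
  - by apply/set0Pn; exists ord_max; rewrite set11.
  - by move=> k; rewrite in_set1 => /eqP ->.
  - split; first by rewrite hx1.
    by move=> k; rewrite in_set1 => /eqP ->; rewrite hxm.
  - by rewrite hx1.
  - move=> k; rewrite in_set1 => /eqP ->; rewrite cards1 hxm /xbark addrK divr1.
    by [].
by rewrite /pi1 big_set1 hx1 hxm.
Qed.
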